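(* Let $k$ be a commutative ring, $A$ a commutative $k$-algebra, $(A,\mathfrak g_{A/k},\alpha)$ a Lie algebroid, $S^\cdot$ a noetherian graded $\mathfrak g_{A/k}$-algebra which is semi-simple over $\mathfrak g_{A/k}$ with $\bar S^0$ noetherian, and $M^\cdot$ a graded $(S^\cdot,\mathfrak g_{A/k})$-module of finite type over $S^\cdot$ which is semi-simple over $\mathfrak g_{A/k}$. Write $S^\cdot=A\bar S^\cdot\oplus Q$ with $Q$ a (semi-simple) $\mathfrak g_{A/k}$-submodule of $S^\cdot$, and $M^\cdot=A\bar M^\cdot\oplus M_1$ with $M_1$ a $\mathfrak g_{A/k}$-submodule of $M^\cdot$. Then $Q\cdot\bar M^\cdot\subset M_1$.
   Context: A Lie algebroid $(A,\mathfrak g_{A/k},\alpha)$: an $A$-module of finite type $\mathfrak g_{A/k}$ with a $k$-bilinear Lie bracket and a map $\alpha:\mathfrak g_{A/k}\to T_{A/k}$ (the $k$-derivations of $A$) which is a homomorphism of Lie algebras and $A$-modules, with $[\delta,a\eta]=\alpha(\delta)(a)\eta+a[\delta,\eta]$. A $\mathfrak g_{A/k}$-module is an $A$-module $M$ with a $k$-Lie algebra homomorphism $f:\mathfrak g_{A/k}\to\mathrm{End}_k(M)$ satisfying $f(a\delta)(m)=af(\delta)(m)$ and $f(\delta)(am)=\alpha(\delta)(a)m+af(\delta)(m)$; semi-simple means a direct sum of simple $\mathfrak g_{A/k}$-modules. A graded $\mathfrak g_{A/k}$-algebra is a graded commutative $A$-algebra $S^\cdot=\bigoplus_{i\ge0}S^i$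 which is a $\mathfrak g_{A/k}$-module via an $A$-linear Lie algebra homomorphism $\phi:\mathfrak g_{A/k}\to T_{S^\cdot/k}$ preserving each $S^i$. A graded $(S^\cdot,\mathfrak g_{A/k})$-module is a graded $S^\cdot$-module $M^\cdot=\bigoplus_{i\in\mathbb Z}M^i$ which is a $\mathfrak g_{A/k}$-module with $\delta M^i\subset M^i$ and $\delta(sm)=\delta(s)m+s\,\delta m$. Bars denote invariants: $\bar M^\cdot=\{m:\delta m=0\ \forall\delta\in\mathfrak g_{A/k}\}$, similarly $\bar S^\cdot$; $A\bar S^\cdot$ and $A\bar M^\cdot$ are the $A$-submodules they generate, which are $\mathfrak g_{A/k}$-submodules. *)

(* Defs.v *)
From HB Require Import structures.
From mathcomp Require Import all_boot all_algebra.
Set Implicit Arguments. Unset Strict Implicit. Unset Printing Implicit Defensive.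
Import GRing.Theory.
Local Open Scope ring_scope.

(* Conventions: all modules are given by a carrier (zmod/lmod type) together
   with an explicit scalar action; submodules / gradings are Prop-valued
   predicates on the carrier. *)

Definition finite_type (R : Type) (V : nmodType) (sc : R -> V -> V) : Prop :=
  exists (n : nat) (gens : 'I_n -> V),
    forall v, exists c : 'I_n -> R, v = \sum_(i < n) sc (c i) (gens i).

Definition internal_direct_sum (I : eqType) (V : zmodType) (D : I -> V -> Prop) : Prop :=
  [/\ forall i, D i 0,
      forall i x y, D i x -> D i y -> D i (x - y),
      forall v, exists (s : seq I) (h : I -> V),
         [/\ uniq s, forall i, i \in s -> D i (h i) & v = \sum_(i <- s) h i] &
      forall (s : seq I) (h : I -> V), uniq s -> (forall i, i \in s -> D i (h i)) ->
         \sum_(i <- s) h i = 0 -> forall i, i \in s -> h i = 0 ].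

Definition direct_sum2 (V : zmodType) (P Q : V -> Prop) : Prop :=
  (forall x, exists p q, [/\ P p, Q q & x = p + q]) /\
  (forall x, P x -> Q x -> x = 0).

(* Noetherianity of the subring P of R: every ideal of P is finitely generated.
   With P = (fun _ => True) this is noetherianity of R. *)
Definition noetherian_on (R : comPzRingType) (P : R -> Prop) : Prop :=
  forall I : R -> Prop,
    (forall x, I x -> P x) -> I 0 ->
    (forall x y, I x -> I y -> I (x + y)) ->
    (forall r x, P r -> I x -> I (r * x)) ->
    exists (n : nat) (gens : 'I_n -> R),
      (forall i, I (gens i)) /\
      forall x, I x -> exists c : 'I_n -> R,
          (forall i, P (c i)) /\ x = \sum_(i < n) c i * gens i.

Section LieAlgebroid.
Variables (k : comPzRingType) (A : comAlgType k).

Definition kderivation (V : comPzRingType) (ksc : k -> V -> V) (D : V -> V) : Prop :=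
  [/\ forall x y, D (x + y) = D x + D y,
      forall c x, D (ksc c x) = ksc c (D x) &
      forall x y, D (x * y) = D x * y + x * D y].

Record lie_algebroid (g : lmodType A) (br : g -> g -> g) (alpha : g -> A -> A) : Prop := {
  la_finite : finite_type ( *:%R : A -> g -> g);
  la_addl : forall x y z, br (x + y) z = br x z + br y z;
  la_addr : forall x y z, br x (y + z) = br x y + br x z;
  la_scalel : forall (c : k) x y, br ((c%:A) *: x) y = (c%:A) *: br x y;
  la_scaler : forall (c : k) x y, br x ((c%:A) *: y) = (c%:A) *: br x y;
  la_alt : forall x, br x x = 0;
  la_jacobi : forall x y z, br x (br y z) + br y (br z x) + br z (br x y) = 0;
  la_der : forall d, kderivation ( *:%R : k -> A -> A) (alpha d);
  la_alpha_add : forall d e b, alpha (d + e) b = alpha d b + alpha e b;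
  la_alpha_scale : forall a d b, alpha (a *: d) b = a * alpha d b;
  la_alpha_br : forall d e b, alpha (br d e) b = alpha d (alpha e b) - alpha e (alpha d b);
  la_leibniz : forall d a e, br d (a *: e) = alpha d a *: e + a *: br d e
}.

Variables (g : lmodType A) (br : g -> g -> g) (alpha : g -> A -> A).

Record gmodule (V : zmodType) (sc : A -> V -> V) (f : g -> V -> V) : Prop := {
  gm_add : forall d x y, f d (x + y) = f d x + f d y;
  gm_addg : forall d e x, f (d + e) x = f d x + f e x;
  gm_scaleg : forall a d x, f (a *: d) x = sc a (f d x);
  gm_br : forall d e x, f (br d e) x = f d (f e x) - f e (f d x);
  gm_leibniz : forall d a x, f d (sc a x) = sc (alpha d a) x + sc a (f d x)
}.

End LieAlgebroid.

Section Submodules.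
Variables (A : pzRingType) (g : Type) (V : zmodType) (sc : A -> V -> V) (f : g -> V -> V).

Definition gsubmodule (W : V -> Prop) : Prop :=
  [/\ W 0, forall x y, W x -> W y -> W (x + y),
      forall a x, W x -> W (sc a x) & forall d x, W x -> W (f d x)].

Definition gsimple (W : V -> Prop) : Prop :=
  [/\ gsubmodule W, exists2 w, W w & w != 0 &
      forall W' : V -> Prop, gsubmodule W' -> (forall x, W' x -> W x) ->
        (forall x, W' x -> x = 0) \/ (forall x, W x -> W' x)].

Definition gsemisimple : Prop :=
  exists (I : eqType) (W : I -> V -> Prop),
    (forall i, gsimple (W i)) /\ internal_direct_sum W.

Definition ginvariant (x : V) : Prop := forall d, f d x = 0.

(* A \bar V : the A-submodule generated by the invariants. *)
Definition span_invariants (x : V) : Prop :=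
  exists (n : nat) (a : 'I_n -> A) (v : 'I_n -> V),
    (forall i, ginvariant (v i)) /\ x = \sum_(i < n) sc (a i) (v i).

End Submodules.

Section Graded.
Variables (k : comPzRingType) (A : comAlgType k) (g : lmodType A)
  (br : g -> g -> g) (alpha : g -> A -> A).

Record graded_galgebra (S : comAlgType A) (Sdeg : nat -> S -> Prop) (phi : g -> S -> S) : Prop := {
  ga_graded : internal_direct_sum (Sdeg : nat -> S -> Prop);
  ga_Amod : forall i a x, Sdeg i x -> Sdeg i (a *: x);
  ga_mul : forall i j x y, Sdeg i x -> Sdeg j y -> Sdeg (i + j)%N (x * y);
  ga_gmod : gmodule br alpha ( *:%R : A -> S -> S) phi;
  ga_der : forall d, kderivation (fun (c : k) (s : S) => ((c%:A : A) *: s)) (phi d);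
  ga_pres : forall d i x, Sdeg i x -> Sdeg i (phi d x)
}.

Definition ascale (S : comAlgType A) (M : lmodType S) (a : A) (m : M) : M := (a%:A : S) *: m.

Record graded_gmodule (S : comAlgType A) (Sdeg : nat -> S -> Prop) (phi : g -> S -> S)
    (M : lmodType S) (Mdeg : int -> M -> Prop) (rho : g -> M -> M) : Prop := {
  gmm_graded : internal_direct_sum (Mdeg : int -> M -> Prop);
  gmm_Amod : forall i a m, Mdeg i m -> Mdeg i (ascale a m);
  gmm_mul : forall (i : nat) (j : int) s m, Sdeg i s -> Mdeg j m -> Mdeg (i%:Z + j) (s *: m);
  gmm_gmod : gmodule br alpha (@ascale S M) rho;
  gmm_pres : forall d i m, Mdeg i m -> Mdeg i (rho d m);
  gmm_leibniz : forall d s m, rho d (s *: m) = phi d s *: m + s *: rho d m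
}.

End Graded.

(* Main.v *)
Require Import Defs.
From HB Require Import structures.
From mathcomp Require Import all_boot all_algebra.
From Stdlib Require Import IndefiniteDescription.
Import GRing.Theory.
Local Open Scope ring_scope.

Section Add.
Variables (V W : zmodType) (T : V -> W) (Tadd : forall x y, T (x + y) = T x + T y).
Lemma add0 : T 0 = 0.
Proof. by apply: (addrI (T 0)); rewrite -Tadd !addr0. Qed.
Lemma addN x : T (- x) = - T x.
Proof. by apply/eqP; rewrite -subr_eq0 opprK -Tadd addNr add0. Qed.
Lemma addB x y : T (x - y) = T x - T y.
Proof. by rewrite Tadd addN. Qed.
Lemma add_sum (I : Type) (r : seq I) (F : I -> V) : T (\sum_(i <- r) F i) = \sum_(i <- r) T (F i).
Proof. exact: (big_morph T Tadd add0). Qed.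
End Add.

Section DS2.
Variables (V : zmodType) (P Q : V -> Prop).
Hypotheses (P0 : P 0) (PB : forall x y, P x -> P y -> P (x - y))
  (Q0 : Q 0) (QB : forall x y, Q x -> Q y -> Q (x - y)) (HD : direct_sum2 P Q).

Lemma PD x y : P x -> P y -> P (x + y).
Proof. move=> Px Py; rewrite -[y]opprK; apply: PB => //; rewrite -sub0r; exact: PB. Qed.
Lemma QD x y : Q x -> Q y -> Q (x + y).
Proof. move=> Px Py; rewrite -[y]opprK; apply: QB => //; rewrite -sub0r; exact: QB. Qed.

Lemma ds2_proj : exists pr : V -> V,
  [/\ forall x, Q (pr x) /\ P (x - pr x), forall x y, pr (x + y) = pr x + pr y,
      (forall x, P x -> pr x = 0), (forall x, Q x -> pr x = x) &
      forall T : V -> V, (forall x y, T (x + y) = T x + T y) -> (forall x, P x -> P (T x)) ->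
        (forall x, Q x -> Q (T x)) -> forall x, pr (T x) = T (pr x)].
Proof.
have H x : exists q, Q q /\ P (x - q).
  case: HD => /(_ x) [p [q [Pp Qq ->]]] _; exists q; split => //.
  by rewrite addrK.
pose pr x := proj1_sig (constructive_indefinite_description _ (H x)).
have prQ x : Q (pr x) by rewrite /pr; case: constructive_indefinite_description => ? [].
have prP x : P (x - pr x) by rewrite /pr; case: constructive_indefinite_description => ? [].
have uniq x q : Q q -> P (x - q) -> pr x = q.
  move=> Qq Pq; apply/eqP; rewrite -subr_eq0; apply/eqP; case: HD => _; apply.
    have -> : pr x - q = (x - q) - (x - pr x).
      by rewrite opprB addrA -[X in _ = X]addrA addrC addrA subrK addrC.
    exact: PB.
  exact: QB.
exists pr; split => //.
- move=> x y; apply: uniq; first exact: QD.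
  have -> : x + y - (pr x + pr y) = (x - pr x) + (y - pr y).
    by rewrite opprD addrACA.
  exact: PD.
- by move=> x Px; apply: uniq => //; rewrite subr0.
- by move=> x Qx; apply: uniq => //; rewrite subrr.
- move=> T Tadd TP TQ x; apply: uniq; first exact: TQ.
  by rewrite -(@addB _ _ T Tadd); apply: TP.
Qed.
End DS2.

Section IDS.
Variables (I : eqType) (V : zmodType) (D : I -> V -> Prop) (HI : internal_direct_sum D).

Lemma ids_D0 i : D i 0. Proof. by case: HI. Qed.
Lemma ids_DB i x y : D i x -> D i y -> D i (x - y). Proof. by case: HI => _ H _ _; apply: H. Qed.
Lemma ids_DD i x y : D i x -> D i y -> D i (x + y).
Proof. move=> Px Py; rewrite -[y]opprK; apply: ids_DB => //; rewrite -sub0r; apply: ids_DB => //; exact: ids_D0. Qed.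

Lemma sum_ext (s t : seq I) (h : I -> V) : uniq s -> uniq t -> {subset s <= t} ->
  \sum_(i <- t) (if i \in s then h i else 0) = \sum_(i <- s) h i.
Proof.
move=> us ut st; rewrite -big_mkcond -big_filter; apply: perm_big.
apply: uniq_perm => //; first exact: filter_uniq.
by move=> x; rewrite mem_filter; case xs: (x \in s) => //=; rewrite st.
Qed.

Lemma ids_cmp (s s' : seq I) (h h' : I -> V) :
  uniq s -> (forall i, i \in s -> D i (h i)) ->
  uniq s' -> (forall i, i \in s' -> D i (h' i)) ->
  \sum_(i <- s) h i = \sum_(i <- s') h' i ->
  forall j, (if j \in s then h j else 0) = (if j \in s' then h' j else 0).
Proof.
move=> us Ds us' Ds' E j.
pose t := undup (s ++ s').
have ut : uniq t := undup_uniq _.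
have st : {subset s <= t} by move=> x xs; rewrite mem_undup mem_cat xs.
have st' : {subset s' <= t} by move=> x xs; rewrite mem_undup mem_cat xs orbT.
pose k i := (if i \in s then h i else 0) - (if i \in s' then h' i else 0).
have Dk i : D i (k i).
  by apply: ids_DB; [case: ifP => [/Ds|_]|case: ifP => [/Ds'|_]] => //; apply: ids_D0.
have sk : \sum_(i <- t) k i = 0.
  by rewrite sumrB !sum_ext // E subrr.
case: HI => _ _ _ /(_ t k ut (fun i _ => Dk i) sk j) Hk.
case jt: (j \in t).
  by apply/eqP; rewrite -subr_eq0; apply/eqP; apply: Hk.
have -> : (j \in s) = false by apply: negbTE; apply: contraFN jt; apply: st.
by have -> : (j \in s') = false by apply: negbTE; apply: contraFN jt; apply: st'.
Qed.

Lemma ids_coord : exists c : I -> V -> V,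
  [/\ forall j x, D j (c j x), forall j x y, c j (x + y) = c j x + c j y,
      forall T : V -> V, (forall x y, T (x + y) = T x + T y) -> (forall i x, D i x -> D i (T x)) ->
        forall j x, c j (T x) = T (c j x) &
      forall x, x != 0 -> exists j, c j x != 0].
Proof.
have H x : exists sh : seq I * (I -> V),
    [/\ uniq sh.1, forall i, i \in sh.1 -> D i (sh.2 i) & x = \sum_(i <- sh.1) sh.2 i].
  by case: HI => _ _ /(_ x) [s [h [? ? ?]]] _; exists (s, h).
pose sh x := proj1_sig (constructive_indefinite_description _ (H x)).
have shP x : [/\ uniq (sh x).1, forall i, i \in (sh x).1 -> D i ((sh x).2 i)
   & x = \sum_(i <- (sh x).1) (sh x).2 i].
  by rewrite /sh; case: constructive_indefinite_description.
pose c j x := if j \in (sh x).1 then (sh x).2 j else 0.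
have cE x s h : uniq s -> (forall i, i \in s -> D i (h i)) -> x = \sum_(i <- s) h i ->
    forall j, c j x = if j \in s then h j else 0.
  move=> us Ds Ex j; case: (shP x) => u1 D1 E1; apply: ids_cmp => //.
  by rewrite -E1.
have cD j x : D j (c j x).
  by rewrite /c; case: ifP => [ii|_]; [by case: (shP x) => _ Dx _; apply: Dx | apply: ids_D0].
have cS x : x = \sum_(i <- (sh x).1) c i x.
  case: (shP x) => u1 D1 E1; rewrite {1}E1; apply: eq_big_seq => i ii.
  by rewrite /c ii.
exists c; split => //.
- move=> j x y.
  pose t := undup ((sh x).1 ++ (sh y).1).
  have st : {subset (sh x).1 <= t} by move=> z zs; rewrite mem_undup mem_cat zs.
  have st' : {subset (sh y).1 <= t} by move=> z zs; rewrite mem_undup mem_cat zs orbT.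
  rewrite (cE (x + y) t (fun i => c i x + c i y)) //.
  + case jt: (j \in t) => //.
    rewrite /c.
    have -> : (j \in (sh x).1) = false by apply: negbTE; apply: contraFN jt; apply: st.
    have -> : (j \in (sh y).1) = false by apply: negbTE; apply: contraFN jt; apply: st'.
    by rewrite addr0.
  + exact: undup_uniq.
  + by move=> i _; apply: ids_DD.
  + rewrite big_split /=.
    case: (shP x) => u1 _ Ex; case: (shP y) => u2 _ Ey.
    by rewrite /c !sum_ext ?undup_uniq // -Ex -Ey.
- move=> T Tadd TD j x.
  have T0 : T 0 = 0 by apply: (addrI (T 0)); rewrite -Tadd !addr0.
  case: (shP x) => u1 D1 E1.
  rewrite (cE (T x) (sh x).1 (fun i => T ((sh x).2 i))) //.
  + by rewrite /c; case: ifP.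
  + by move=> i ii; apply: TD; apply: D1.
  + by rewrite {1}E1 (big_morph T Tadd T0).
- move=> x; rewrite {1}(cS x) => nz.
  case hs: (has (fun i => c i x != 0) (sh x).1).
    by case/hasP: hs => i _ ?; exists i.
  move/hasPn: hs => hs; case/eqP: nz; apply: big1_seq => i /andP [_ ii].
  by apply/eqP; move: (hs i ii); rewrite negbK.
Qed.
End IDS.

Section Span.
Variables (k : comPzRingType) (A : comAlgType k) (g : lmodType A)
  (br : g -> g -> g) (alpha : g -> A -> A)
  (V : zmodType) (sc : A -> V -> V) (f : g -> V -> V).
Hypotheses (Hg : gmodule br alpha sc f)
  (sc_add : forall a x y, sc a (x + y) = sc a x + sc a y)
  (sc_mul : forall a b x, sc a (sc b x) = sc (a * b) x) (sc1 : forall x, sc 1 x = x).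

Let P := span_invariants sc f.

Lemma sc0 a : sc a 0 = 0. Proof. by apply: (addrI (sc a 0)); rewrite -sc_add !addr0. Qed.
Lemma f0 d : f d 0 = 0. Proof. by apply: (addrI (f d 0)); rewrite -(gm_add Hg) !addr0. Qed.
Lemma scN a x : sc a (- x) = - sc a x.
Proof. by apply/eqP; rewrite -subr_eq0 opprK -sc_add addNr sc0. Qed.
Lemma fN d x : f d (- x) = - f d x.
Proof. by apply/eqP; rewrite -subr_eq0 opprK -(gm_add Hg) addNr f0. Qed.

Lemma span0 : P 0.
Proof. by exists 0%N, (fun _ => 0), (fun _ => 0); split; [by move=> i d; rewrite f0 | by rewrite big_ord0]. Qed.

Lemma spanN x : P x -> P (- x).
Proof.
case=> n [a [v [Iv ->]]]; exists n, a, (fun i => - v i); split.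
  by move=> i d; rewrite fN Iv oppr0.
by rewrite -sumrN; apply: eq_bigr => i _; rewrite scN.
Qed.

Lemma spanD x y : P x -> P y -> P (x + y).
Proof.
case=> n [a [v [Iv ->]]]; case=> m [b [w [Iw ->]]].
exists (n + m)%N, (fun i => match split i with inl j => a j | inr j => b j end),
  (fun i => match split i with inl j => v j | inr j => w j end); split.
  by move=> i; case: (split i).
rewrite big_split_ord /=; congr (_ + _); apply: eq_bigr => i _.
  by rewrite (unsplitK (inl i)).
by rewrite (unsplitK (inr i)).
Qed.

Lemma spanB x y : P x -> P y -> P (x - y).
Proof. by move=> Px Py; apply: spanD => //; apply: spanN. Qed.

Lemma spanZ c x : P x -> P (sc c x).
Proof.
case=> n [a [v [Iv ->]]]; exists n, (fun i => c * a i), v; split => //.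
rewrite (big_morph (sc c) (sc_add c) (sc0 c)); apply: eq_bigr => i _; exact: sc_mul.
Qed.

Lemma spanF d x : P x -> P (f d x).
Proof.
case=> n [a [v [Iv ->]]]; exists n, (fun i => alpha d (a i)), v; split => //.
rewrite (big_morph (f d) (gm_add Hg d) (f0 d)); apply: eq_bigr => i _.
by rewrite (gm_leibniz Hg) Iv sc0 addr0.
Qed.

Lemma spanI x : ginvariant f x -> P x.
Proof.
move=> Ix; exists 1%N, (fun _ => 1), (fun _ => x); split => //.
by rewrite big_ord1 sc1.
Qed.
End Span.

Lemma sum_nz (V : zmodType) (I : eqType) (r : seq I) (F : I -> V) :
  \sum_(i <- r) F i != 0 -> exists2 i, i \in r & F i != 0.
Proof.
elim: r => [|x r IH]; first by rewrite big_nil eqxx.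
rewrite big_cons; case: (eqVneq (F x) 0) => [->|nz _]; last by exists x; rewrite ?mem_head.
by rewrite add0r => /IH [y yr ?]; exists y; rewrite // in_cons yr orbT.
Qed.

Theorem mainTheorem3 (k : comPzRingType) (A : comAlgType k) (g : lmodType A)
  (br : g -> g -> g) (alpha : g -> A -> A)
  (S : comAlgType A) (Sdeg : nat -> S -> Prop) (phi : g -> S -> S)
  (M : lmodType S) (Mdeg : int -> M -> Prop) (rho : g -> M -> M)
  (Q : S -> Prop) (M1 : M -> Prop) :
  lie_algebroid br alpha ->
  graded_galgebra br alpha Sdeg phi ->
  noetherian_on (fun _ : S => True) ->
  gsemisimple ( *:%R : A -> S -> S) phi ->
  noetherian_on (fun s : S => Sdeg 0%N s /\ ginvariant phi s) ->
  graded_gmodule br alpha Sdeg phi Mdeg rho ->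
  finite_type ( *:%R : S -> M -> M) ->
  gsemisimple (@ascale k A S M) rho ->
  gsubmodule ( *:%R : A -> S -> S) phi Q ->
  direct_sum2 (span_invariants ( *:%R : A -> S -> S) phi) Q ->
  gsubmodule (@ascale k A S M) rho M1 ->
  direct_sum2 (span_invariants (@ascale k A S M) rho) M1 ->
  forall (q : S) (m : M), Q q -> ginvariant rho m -> M1 (q *: m).
Proof.
move=> _ HS _ [IS [W [Wsimp Wds]]] _ HM _ [JM [U [Usimp Uds]]] HQ HSQ HM1 HMM1 q m Qq Im.
have gmS := ga_gmod HS; have gmM := gmm_gmod HM.
have scS_add : forall (a : A) (x y : S), a *: (x + y) = a *: x + a *: y by move=> *; rewrite scalerDr.
have scS_mul : forall (a b : A) (x : S), a *: (b *: x) = (a * b) *: x by move=> *; rewrite scalerA.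
have scS1 : forall x : S, (1 : A) *: x = x by move=> *; rewrite scale1r.
have scM_add : forall (a : A) (x y : M), ascale a (x + y) = ascale a x + ascale a y.
  by move=> *; rewrite /ascale scalerDr.
have scM_mul : forall (a b : A) (x : M), ascale a (ascale b x) = ascale (a * b) x.
  by move=> *; rewrite /ascale scalerA -scalerAl mul1r scalerA.
have scM1 : forall x : M, ascale (1 : A) x = x by move=> *; rewrite /ascale scale1r scale1r.
have scMN1 : forall x : M, ascale (-1 : A) x = - x by move=> *; rewrite /ascale scaleN1r scaleN1r.
case: HQ => Q0 QD QZ QF.
have QB x y : Q x -> Q y -> Q (x - y).
  by move=> Qx Qy; apply: QD => //; rewrite -scaleN1r; apply: QZ.
case: HM1 => M10 M1D M1Z M1F.
have M1B x y : M1 x -> M1 y -> M1 (x - y).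
  by move=> Qx Qy; apply: M1D => //; rewrite -scMN1; apply: M1Z.
have [prQ [prQP prQadd prQ0 prQid prQT]] :=
  @ds2_proj _ _ _ (@span0 _ _ _ _ _ _ _ _ gmS) (@spanB _ _ _ _ _ _ _ _ gmS scS_add) Q0 QB HSQ.
have [prM [prMP prMadd prM0 prMid prMT]] :=
  @ds2_proj _ _ _ (@span0 _ _ _ _ _ _ _ _ gmM) (@spanB _ _ _ _ _ _ _ _ gmM scM_add) M10 M1B HMM1.
pose pi x := x - prM x.
have piP x : span_invariants (@ascale k A S M) rho (pi x) by case: (prMP x).
have piadd x y : pi (x + y) = pi x + pi y by rewrite /pi prMadd opprD addrACA.
have piT (T : M -> M) : (forall x y, T (x + y) = T x + T y) ->
   (forall x, span_invariants (@ascale k A S M) rho x -> span_invariants (@ascale k A S M) rho (T x)) ->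
   (forall x, M1 x -> M1 (T x)) -> forall x, pi (T x) = T (pi x).
  by move=> Tadd TP TQ x; rewrite /pi (prMT T) // (@addB _ _ T Tadd).
have piZ a x : pi (ascale a x) = ascale a (pi x).
  apply: (piT (ascale a)).
  - exact: scM_add.
  - by move=> y; apply: (@spanZ _ _ _ _ _ _ scM_add scM_mul).
  - by move=> y; apply: M1Z.
have piF d x : pi (rho d x) = rho d (pi x).
  apply: (piT (rho d)) => //; first exact: (gm_add gmM d).
    by move=> y; apply: (@spanF _ _ _ _ _ _ _ _ gmM scM_add).
  by move=> y; apply: M1F.
have prQZ (a : A) x : prQ (a *: x) = a *: prQ x.
  apply: (prQT (fun y => a *: y)) => //.
    by move=> y; apply: (@spanZ _ _ _ _ _ _ scS_add scS_mul).
  by move=> y; apply: QZ.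
have prQF d x : prQ (phi d x) = phi d (prQ x).
  apply: (prQT (phi d)) => //; first exact: (gm_add gmS d).
    by move=> y; apply: (@spanF _ _ _ _ _ _ _ _ gmS scS_add).
  by move=> y; apply: QF.
pose F s := pi (prQ s *: m).
have Fadd x y : F (x + y) = F x + F y by rewrite /F prQadd scalerDl piadd.
have FZ (a : A) x : F (a *: x) = ascale a (F x).
  by rewrite /F prQZ -piZ /ascale scalerA mulr_algl.
have rhom d : rho d m = 0 by apply: Im.
have FF d x : F (phi d x) = rho d (F x).
  by rewrite /F -piF (gmm_leibniz HM) rhom scaler0 addr0 prQF.
case: (eqVneq (pi (q *: m)) 0) => [E|nz].
  have -> : q *: m = prM (q *: m) by apply/eqP; rewrite -subr_eq0; apply/eqP.
  by case: (prMP (q *: m)).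
have Fq : F q = pi (q *: m) by rewrite /F prQid.
case: Wds => _ _ /(_ q) [s [h [us Dh Eq]]] _.
have : \sum_(i <- s) F (h i) != 0 by rewrite -(@add_sum _ _ F Fadd) -Eq Fq.
move=> /sum_nz [i hi_in nzi].
have [c [cD cadd cT cnz]] := @ids_coord _ _ _ Uds.
have [j nzj] := cnz _ nzi.
have Usub jj := let: And3 X _ _ := Usimp jj in X.
have cZ (a : A) x : c j (ascale a x) = ascale a (c j x).
  apply: (cT (ascale a)).
  - exact: scM_add.
  - by move=> ii y Uy; case: (Usub ii) => _ _ Z _; apply: Z.
have cF d x : c j (rho d x) = rho d (c j x).
  apply: (cT (rho d)).
  - exact: (gm_add gmM d).
  - by move=> ii y Uy; case: (Usub ii) => _ _ _ Z; apply: Z.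
pose G x := c j (F x).
have Gadd x y : G (x + y) = G x + G y by rewrite /G Fadd cadd.
have G0 : G 0 = 0 by apply: (@add0 _ _ G Gadd).
have GZ (a : A) x : G (a *: x) = ascale a (G x) by rewrite /G FZ cZ.
have GF d x : G (phi d x) = rho d (G x) by rewrite /G FF cF.
have [Wsub _ Wmin] := Wsimp i.
case: (Wsub) => W0 WD WZ WF.
have [Usb _ Umin] := Usimp j.
case: (Usb) => U0 UD UZ UF.
have Ghi : G (h i) != 0 by [].
have Ginj : forall x, W i x -> G x = 0 -> x = 0.
  have Ksub : gsubmodule ( *:%R : A -> S -> S) phi (fun x => W i x /\ G x = 0).
    split.
    - by split.
    - by move=> x y [Wx Gx] [Wy Gy]; split; [apply: WD | rewrite Gadd Gx Gy addr0].
    - by move=> a x [Wx Gx]; split; [apply: WZ | rewrite GZ Gx (@sc0 _ _ _ _ scM_add)].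
    - by move=> d x [Wx Gx]; split; [apply: WF | rewrite GF Gx (@add0 _ _ _ (gm_add gmM d))].
  case: (Wmin _ Ksub (fun x Kx => proj1 Kx)) => [H x Wx Gx|H]; first exact: H.
  by case: (H _ (Dh i hi_in)) => _ /eqP; rewrite (negbTE Ghi).
have Gsurj : forall u, U j u -> exists2 w, W i w & G w = u.
  have Isub : gsubmodule (@ascale k A S M) rho (fun u => exists2 w, W i w & G w = u).
    split.
    - by exists 0.
    - by move=> x y [w1 W1 <-] [w2 W2 <-]; exists (w1 + w2); [apply: WD | rewrite Gadd].
    - by move=> a x [w1 W1 <-]; exists (a *: w1); [apply: WZ | rewrite GZ].
    - by move=> d x [w1 W1 <-]; exists (phi d w1); [apply: WF | rewrite GF].
  have IsubU : forall x, (exists2 w, W i w & G w = x) -> U j x.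
    by move=> x [w _ <-]; apply: cD.
  case: (Umin _ Isub IsubU) => [H|H]; last exact: H.
  by case/eqP: Ghi; apply: H; exists (h i) => //; apply: Dh.
have [n [a [v [Iv Ev]]]] := piP (prQ (h i) *: m).
have : c j (F (h i)) != 0 by [].
rewrite /F Ev (@add_sum _ _ _ (cadd j)).
move=> /sum_nz [kk _]; rewrite cZ => nzk.
have nzu : c j (v kk) != 0.
  by apply: contraNneq nzk => ->; rewrite (@sc0 _ _ _ _ scM_add).
have Iu : forall d, rho d (c j (v kk)) = 0.
  by move=> d; rewrite -cF Iv (@add0 _ _ _ (cadd j)).
have [w Ww Gw] := Gsurj _ (cD j (v kk)).
have Iw : forall d, phi d w = 0.
  by move=> d; apply: Ginj; [apply: WF | rewrite GF Gw Iu].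
have Pw : span_invariants ( *:%R : A -> S -> S) phi w.
  by apply: (@spanI _ _ _ _ _ _ scS1).
have : G w = 0.
  by rewrite /G /F prQ0 // scale0r (@add0 _ _ _ piadd) (@add0 _ _ _ (cadd j)).
by rewrite Gw => E; rewrite E eqxx in nzu.
Qed.
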